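(* Let $g$ be a Riemannian metric on $\mathbb{R}^D$ written as $g_x(u,u)=u^{\top}H(x)u$ with $\|H(x)-H(y)\|_{\mathcal{B}}\le L_H\|x-y\|_2$ for all $x,y$. Let $N\ge1$, $\gamma^{\mathrm{p}}\in\mathcal{C}^N_{\mathrm{p}}$, and $K_3^2:=\frac1N\sum_{n=0}^{N-1}\|\beta^{\mathrm{p}}(t_n)\|_2^2$. Then $$\left|\mathcal{E}^g(\gamma^{\mathrm{pl}})-\mathcal{E}^g_{\mathrm{tra},N}(\gamma^{\mathrm{p}})\right|\le\frac{L_HK_3^3}{4N^{1/2}}.$$
   Context: $t_n=n/N$, $h=1/N$; $\mathcal{C}^N_{\mathrm{p}}$ is the set of maps $\gamma^{\mathrm{p}}:\{t_0,\dots,t_N\}\to\mathbb{R}^D$; $\beta^{\mathrm{p}}(t_n)=(\gamma^{\mathrm{p}}(t_{n+1})-\gamma^{\mathrm{p}}(t_n))/h$; $\gamma^{\mathrm{pl}}(t_n+s)=(1-Ns)\gamma^{\mathrm{p}}(t_n)+Ns\gamma^{\mathrm{p}}(t_{n+1})$ for $0\le s\le h$ is the linear interpolation; $\mathcal{E}^g(\gamma)=\int_0^1 g_{\gamma(t)}(\dot\gamma,\dot\gamma)dt$; $\mathcal{E}^g_{\mathrm{tra},N}(\gamma^{\mathrm{p}})=\frac1N\sum_{n=0}^{N-1}g_{(\gamma^{\mathrm{p}}(t_n)+\gamma^{\mathrm{p}}(t_{n+1}))/2}(\beta^{\mathrm{p}}(t_n),\beta^{\mathrm{p}}(t_n))$.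 $\|\cdot\|_{\mathcal{B}}$ is the operator norm. *)

(* Defs.v *)
From HB Require Import structures.
From mathcomp Require Import all_boot all_order all_algebra.
From mathcomp Require Import all_classical all_reals all_analysis.
Set Implicit Arguments. Unset Strict Implicit. Unset Printing Implicit Defensive.
Import Order.TTheory GRing.Theory Num.Theory.
Local Open Scope classical_set_scope.
Local Open Scope ring_scope.

Section Defs.
Variables (R : realType) (D : nat).

Definition norm2 (u : 'cV[R]_D) : R := Num.sqrt (\sum_(i < D) u i 0 ^+ 2).

Definition opnorm (A : 'M[R]_D) : R :=
  sup [set norm2 (A *m u) | u in [set u : 'cV[R]_D | norm2 u <= 1]].

Definition quadf (A : 'M[R]_D) (u : 'cV[R]_D) : R := (u^T *m A *m u) 0 0.

Definition dcurve (c : R -> 'cV[R]_D) (t : R) : 'cV[R]_D :=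
  \col_i (derive1 (fun s => c s i 0) t).

Definition energy (H : 'cV[R]_D -> 'M[R]_D) (c : R -> 'cV[R]_D) : R :=
  Rintegral lebesgue_measure `[0, 1] (fun t => quadf (H (c t)) (dcurve c t)).

(* discrete curve: gp n = gamma^p(t_n), only n = 0..N used *)
Definition tnode (N n : nat) : R := n%:R / N%:R.

Definition beta (N : nat) (gp : nat -> 'cV[R]_D) (n : nat) : 'cV[R]_D :=
  N%:R *: (gp n.+1 - gp n).

(* piecewise linear interpolation: on [t_n, t_n + h],
   gamma^pl(t_n + s) = (1 - N s) gp n + N s gp (n+1) *)
Definition pl (N : nat) (gp : nat -> 'cV[R]_D) (t : R) : 'cV[R]_D :=
  let n := minn (Num.truncn (t * N%:R)) N.-1 in
  let s := t - tnode N n in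
  (1 - N%:R * s) *: gp n + (N%:R * s) *: gp n.+1.

Definition energy_tra (H : 'cV[R]_D -> 'M[R]_D) (N : nat) (gp : nat -> 'cV[R]_D) : R :=
  N%:R^-1 * \sum_(n < N) quadf (H ((2%:R)^-1 *: (gp n + gp n.+1))) (beta N gp n).

End Defs.

(* Main.v *)
Require Import Defs.
From HB Require Import structures.
From mathcomp Require Import all_boot all_order all_algebra.
From mathcomp Require Import all_classical all_reals all_analysis.
From mathcomp Require Import measurable_realfun.
From mathcomp Require Import ring lra.
Import Order.TTheory GRing.Theory Num.Theory.
Import numFieldNormedType.Exports.
Local Open Scope ring_scope.
Local Open Scope classical_set_scope.
Set Implicit Arguments. Unset Strict Implicit.

Section LinAlg.
Variables (R : realType) (D : nat).

Lemma sum_sq_ge0 (a : 'I_D -> R) : 0 <= \sum_i a i ^+ 2.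
Proof. by apply: sumr_ge0 => i _; exact: sqr_ge0. Qed.

Lemma term_le_sum (a : 'I_D -> R) j : (forall i, 0 <= a i) -> a j <= \sum_i a i.
Proof.
move=> a0; rewrite (bigD1 j) //= lerDl; apply: sumr_ge0 => i _; exact: a0.
Qed.

Lemma CS (a b : 'I_D -> R) :
  \sum_i a i * b i <= Num.sqrt (\sum_i a i ^+ 2) * Num.sqrt (\sum_i b i ^+ 2).
Proof.
set A := \sum_i a i ^+ 2; set B := \sum_i b i ^+ 2.
have A0 : 0 <= A by exact: sum_sq_ge0.
have B0 : 0 <= B by exact: sum_sq_ge0.
have [Az|Ap] := eqVneq (Num.sqrt A) 0.
  have ai0 : forall i, a i = 0.
    move=> i; apply/eqP; rewrite -sqrf_eq0.
    rewrite eq_le sqr_ge0 andbT.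
    move/eqP: Az; rewrite sqrtr_eq0 => Ale.
    by apply: le_trans Ale; apply: (term_le_sum (a := fun i => a i ^+ 2)) => k; exact: sqr_ge0.
  by rewrite Az mul0r big1 // => i _; rewrite ai0 mul0r.
have [Bz|Bp] := eqVneq (Num.sqrt B) 0.
  have bi0 : forall i, b i = 0.
    move=> i; apply/eqP; rewrite -sqrf_eq0.
    rewrite eq_le sqr_ge0 andbT.
    move/eqP: Bz; rewrite sqrtr_eq0 => Ble.
    by apply: le_trans Ble; apply: (term_le_sum (a := fun i => b i ^+ 2)) => k; exact: sqr_ge0.
  by rewrite Bz mulr0 big1 // => i _; rewrite bi0 mulr0.
set sA := Num.sqrt A; set sB := Num.sqrt B.
have sAp : 0 < sA by rewrite lt_def Ap sqrtr_ge0.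
have sBp : 0 < sB by rewrite lt_def Bp sqrtr_ge0.
have key : forall i, 2 * (a i * b i) <= (sB / sA) * a i ^+ 2 + (sA / sB) * b i ^+ 2.
  move=> i.
  have h : 0 <= (sB * a i - sA * b i) ^+ 2 / (sA * sB).
    by apply: divr_ge0; rewrite ?sqr_ge0 // mulr_ge0 // ltW.
  rewrite -subr_ge0; apply: le_trans h _; rewrite le_eqVlt; apply/orP; left.
  by apply/eqP; field; rewrite !lt0r_neq0.
have : 2 * \sum_i a i * b i <= (sB / sA) * A + (sA / sB) * B.
  rewrite mulr_sumr /A /B !mulr_sumr -big_split /=; apply: ler_sum => k _; exact: key.
have eA : A = sA ^+ 2 by rewrite sqr_sqrtr.
have eB : B = sB ^+ 2 by rewrite sqr_sqrtr.
rewrite eA eB => h.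
have : (sB / sA) * sA ^+ 2 + (sA / sB) * sB ^+ 2 = 2 * (sA * sB).
  by field; rewrite !lt0r_neq0.
move=> e; rewrite e in h.
by rewrite -(ler_pM2l (ltr0Sn R 1)).
Qed.

Lemma CSabs (a b : 'I_D -> R) :
  `|\sum_i a i * b i| <= Num.sqrt (\sum_i a i ^+ 2) * Num.sqrt (\sum_i b i ^+ 2).
Proof.
case: (ler0P (\sum_i a i * b i)) => h0; last exact: CS.
have e1 : \sum_i (- a i) ^+ 2 = \sum_i a i ^+ 2.
  by apply: eq_bigr => i _; rewrite sqrrN.
have e2 : \sum_i (- a i) * b i = - \sum_i a i * b i.
  by rewrite -sumrN; apply: eq_bigr => i _; rewrite mulNr.
have := CS (fun i => - a i) b; rewrite /= e1 e2 => h.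
by [].
Qed.

End LinAlg.

Section LinAlg2.
Variables (R : realType) (D : nat).
Implicit Types (u v w : 'cV[R]_D) (A B : 'M[R]_D).

Lemma sq_le_of_abs (x y : R) : `|x| <= y -> x ^+ 2 <= y ^+ 2.
Proof.
move=> h; have y0 : 0 <= y := le_trans (normr_ge0 x) h.
rewrite -real_normK ?num_real //.
by rewrite ler_sqr // nnegrE ?normr_ge0.
Qed.

Lemma norm2_ge0 u : 0 <= norm2 u.
Proof. exact: sqrtr_ge0. Qed.

Lemma norm2Z (c : R) u : norm2 (c *: u) = `|c| * norm2 u.
Proof.
rewrite /norm2 -sqrtr_sqr -sqrtrM ?sqr_ge0 // mulr_sumr.
by congr Num.sqrt; apply: eq_bigr => i _; rewrite !mxE exprMn.
Qed.

Lemma norm2N u : norm2 (- u) = norm2 u.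
Proof. by rewrite -scaleN1r norm2Z normrN normr1 mul1r. Qed.

Lemma norm2_0 : norm2 (0 : 'cV[R]_D) = 0.
Proof. by rewrite -(scale0r (0 : 'cV[R]_D)) norm2Z normr0 mul0r. Qed.

Lemma norm2_eq0 u : norm2 u = 0 -> u = 0.
Proof.
move/eqP; rewrite sqrtr_eq0 => h.
apply/matrixP => i j; rewrite (ord1 j) mxE; apply/eqP; rewrite -sqrf_eq0.
rewrite eq_le sqr_ge0 andbT; apply: le_trans h.
by apply: (term_le_sum (a := fun i => u i 0 ^+ 2)) => k; exact: sqr_ge0.
Qed.

Lemma dot_bound u w : `|(u^T *m w) 0 0| <= norm2 u * norm2 w.
Proof.
rewrite mxE (eq_bigr (fun i => u i 0 * w i 0)); last by move=> i _; rewrite mxE.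
exact: CSabs.
Qed.

Lemma entry_bound A u i : norm2 u <= 1 ->
  (A *m u) i 0 ^+ 2 <= \sum_j A i j ^+ 2.
Proof.
move=> hu.
have h : `|(A *m u) i 0| <= Num.sqrt (\sum_j A i j ^+ 2) * norm2 u.
  rewrite mxE; exact: CSabs.
have := sq_le_of_abs h; rewrite exprMn sqr_sqrtr ?sum_sq_ge0 // => h2.
apply: le_trans h2 _; rewrite ler_piMr ?sum_sq_ge0 //.
have n0 := norm2_ge0 u.
by rewrite expr2; apply: mulr_ile1.
Qed.

Lemma opnorm_has_ub A :
  has_ubound [set norm2 (A *m u) | u in [set u : 'cV[R]_D | norm2 u <= 1]].
Proof.
exists (Num.sqrt (\sum_i \sum_j A i j ^+ 2)) => _ [u /= hu <-].
rewrite /norm2 ler_sqrt; last by apply: sumr_ge0 => i _; exact: sum_sq_ge0.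
by apply: ler_sum => i _; exact: entry_bound.
Qed.

Lemma opnorm_ub A u : norm2 (A *m u) <= opnorm A * norm2 u.
Proof.
have [/norm2_eq0 ->|nz] := eqVneq (norm2 u) 0.
  by rewrite mulmx0 norm2_0 mulr0.
have np : 0 < norm2 u by rewrite lt_def nz norm2_ge0.
set v := (norm2 u)^-1 *: u.
have hv : norm2 v = 1.
  by rewrite norm2Z ger0_norm ?invr_ge0 ?norm2_ge0 // mulVf.
have : norm2 (A *m v) <= opnorm A.
  by apply: (ub_le_sup (opnorm_has_ub A)); exists v => //=; rewrite hv.
rewrite /v -scalemxAr norm2Z ger0_norm ?invr_ge0 ?norm2_ge0 //.
by rewrite mulrC -ler_pdivlMr ?invr_gt0 // invrK.
Qed.

Definition quadf_sum A u : quadf A u = (u^T *m (A *m u)) 0 0.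
Proof. by rewrite /quadf mulmxA. Qed.

Lemma quadf_bound A u : `|quadf A u| <= opnorm A * norm2 u ^+ 2.
Proof.
rewrite quadf_sum; apply: le_trans (dot_bound _ _) _.
rewrite mulrC expr2 mulrA ler_wpM2r ?norm2_ge0 //.
exact: opnorm_ub.
Qed.

Lemma quadfB A B u : quadf A u - quadf B u = quadf (A - B) u.
Proof. by rewrite /quadf mulmxBr mulmxBl !mxE. Qed.

End LinAlg2.

Section Ana.
Variable R : realType.
Notation mu := (@lebesgue_measure R).

Lemma sqF_derive (u x : R) :
  is_derive x 1 (fun y : R => (y - u) ^+ 2 / 2) (x - u).
Proof.
apply: is_derive_eq.
rewrite !scaler0 add0r subr0; rewrite /GRing.scale /=; by field.
Qed.

Lemma sqG_derive (v x : R) :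
  is_derive x 1 (fun y : R => - ((v - y) ^+ 2 / 2)) (v - x).
Proof.
apply: is_derive_eq.
rewrite ?scaler0 ?add0r ?subr0; rewrite /GRing.scale /=. by field.
Qed.

Lemma lin_derive (u x : R) : is_derive x 1 (fun y : R => y - u) 1.
Proof. by apply: is_derive_eq; rewrite subr0. Qed.

Lemma linN_derive (v x : R) : is_derive x 1 (fun y : R => v - y) (-1).
Proof. by apply: is_derive_eq; rewrite add0r mul1r. Qed.

Lemma deriv_cont (f : R -> R) (x : R) : derivable f x 1 -> f @ x --> f x.
Proof. by move=> h; apply: differentiable_continuous; apply/derivable1_diffP. Qed.

Lemma int_lin (u v : R) : u < v ->
  \int[mu]_(x in `[u, v]) (x - u) = (v - u) ^+ 2 / 2.
Proof.
move=> uv.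
rewrite /Rintegral (@continuous_FTC2 _ _ (fun y : R => (y - u) ^+ 2 / 2)) //=.
- by rewrite subrr expr0n /= mul0r subr0.
- apply: derivable_within_continuous => x _; apply: ex_derive; exact: lin_derive.
- split.
  + by move=> x _; apply: ex_derive; exact: sqF_derive.
  + apply: cvg_at_right_filter; apply: deriv_cont.
    by apply: ex_derive; exact: sqF_derive.
  + apply: cvg_at_left_filter; apply: deriv_cont.
    by apply: ex_derive; exact: sqF_derive.
- by move=> x _; rewrite derive1E; apply: derive_val; exact: sqF_derive.
Qed.

Lemma int_linN (u v : R) : u < v ->
  \int[mu]_(x in `[u, v]) (v - x) = (v - u) ^+ 2 / 2.
Proof.
move=> uv.
rewrite /Rintegral (@continuous_FTC2 _ _ (fun y : R => - ((v - y) ^+ 2 / 2))) //=.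
- by rewrite subrr expr0n /= mul0r oppr0 sub0r opprK -sqrrN opprB.
- apply: derivable_within_continuous => x _; apply: ex_derive; exact: linN_derive.
- split.
  + by move=> x _; apply: ex_derive; exact: sqG_derive.
  + apply: cvg_at_right_filter; apply: deriv_cont.
    by apply: ex_derive; exact: sqG_derive.
  + apply: cvg_at_left_filter; apply: deriv_cont.
    by apply: ex_derive; exact: sqG_derive.
- by move=> x _; rewrite derive1E; apply: derive_val; exact: sqG_derive.
Qed.

Lemma lip_cont (f : R -> R) (K : R) :
  (forall x y, `|f x - f y| <= K * `|x - y|) -> continuous f.
Proof.
move=> h x; apply/cvgrPdist_lt => e e0.
have K0 : 0 < `|K| + 1 by rewrite ltr_wpDl.
near=> y.
apply: (le_lt_trans (h x y)).
apply: (le_lt_trans (y := (`|K| + 1) * `|x - y|)).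
  by rewrite ler_wpM2r // (le_trans (ler_norm K)) // lerDl.
rewrite mulrC -ltr_pdivlMr //.
near: y; apply: cvgr_dist_lt; first exact: cvg_id.
by rewrite divr_gt0.
Unshelve. all: by end_near.
Qed.

Lemma int_abs (a b : R) : a < b ->
  \int[mu]_(x in `[a, b]) `|x - (a + b) / 2| = (b - a) ^+ 2 / 4.
Proof.
move=> ab; set m := (a + b) / 2.
have am : a < m by rewrite /m ltr_pdivlMr // mulr_natr mulr2n ltrD2l.
have mb : m < b by rewrite /m ltr_pdivrMr // mulr_natr mulr2n ltrD2r.
have cf : continuous (fun x : R => `|x - m|).
  apply: (lip_cont (K := 1)) => x y; rewrite mul1r.
  by apply: le_trans (ler_dist_dist _ _) _; rewrite opprB addrA subrK.
have iab : forall c d : R, mu.-integrable `[c, d] (EFin \o (fun x : R => `|x - m|)).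
  move=> c d; apply: continuous_compact_integrable; first exact: segment_compact.
  exact: continuous_subspaceT.
have := @Rintegral_itvB R (fun x : R => `|x - m|) (BLeft a) (BRight b) m (iab a b).
rewrite !bnd_simp (ltW am) (ltW mb) => /(_ erefl erefl).
rewrite Rintegral_itv_obnd_cbnd; last first.
  apply: integrableS (iab m b) => //; exact: subset_itv_oc_cc.
move=> e; have -> : \int[mu]_(x in `[a, b]) `|x - m| =
   \int[mu]_(x in `[a, m]) `|x - m| + \int[mu]_(x in `[m, b]) `|x - m|.
  by rewrite -e addrC subrK.
rewrite (@eq_Rintegral _ _ _ mu `[a, m] (fun x => m - x)); last first.
  by move=> x; rewrite inE /= in_itv /= => /andP[_ xm]; rewrite ler0_norm ?subr_le0 // opprB.
rewrite (@eq_Rintegral _ _ _ mu `[m, b] (fun x => x - m)); last first.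
  by move=> x; rewrite inE /= in_itv /= => /andP[mx _]; rewrite ger0_norm ?subr_ge0.
by rewrite int_linN // int_lin // /m; field.
Qed.

Lemma cont_int (h : R -> R) (c d : R) : continuous h ->
  mu.-integrable `[c, d] (EFin \o h).
Proof.
move=> ch; apply: continuous_compact_integrable; first exact: segment_compact.
exact: continuous_subspaceT.
Qed.

End Ana.

Lemma final_alg (R : realType) (N : nat) (nv : 'I_N -> R) (LH : R) :
  (0 < N)%N -> (forall j, 0 <= nv j) ->
  0 <= \sum_j LH * nv j ^+ 3 / (4 * N%:R ^+ 2) ->
  \sum_j LH * nv j ^+ 3 / (4 * N%:R ^+ 2) <=
  LH * Num.sqrt (N%:R^-1 * \sum_j nv j ^+ 2) ^+ 3 / (4 * Num.sqrt N%:R).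
Proof.
move=> N0 nv0 h0.
have NR : (0 : R) < N%:R by rewrite ltr0n.
set X := 4 * N%:R ^+ 2.
have X0 : 0 < X by rewrite mulr_gt0 // exprn_gt0.
set S := \sum_j nv j ^+ 2.
set T := \sum_j nv j ^+ 3.
have S0 : 0 <= S by apply: sumr_ge0 => j _; exact: sqr_ge0.
have T0 : 0 <= T by apply: sumr_ge0 => j _; exact: exprn_ge0.
have eT : \sum_j LH * nv j ^+ 3 / X = LH * T / X by rewrite mulr_sumr mulr_suml.
have eR : LH * Num.sqrt (N%:R^-1 * S) ^+ 3 / (4 * Num.sqrt N%:R) = LH * (S * Num.sqrt S) / X.
  rewrite sqrtrM ?invr_ge0 ?ler0n // sqrtrV ?ler0n //.
  have q0 : Num.sqrt N%:R != 0 :> R by rewrite gt_eqF // sqrtr_gt0.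
  have e : forall q s : R, q != 0 ->
      LH * (q^-1 * s) ^+ 3 / (4 * q) = LH * (s ^+ 2 * s) / (4 * (q ^+ 2) ^+ 2).
    by move=> q s qn; field.
  by rewrite e // !sqr_sqrtr ?ler0n.
rewrite eT eR; rewrite eT in h0.
have TS : T <= S * Num.sqrt S.
  rewrite /T /S mulr_suml; apply: ler_sum => j _.
  rewrite exprSr ler_wpM2l ?exprn_ge0 //.
  rewrite -(ger0_norm (nv0 j)) -sqrtr_sqr ler_sqrt //.
  by apply: (term_le_sum (a := fun i => nv i ^+ 2)) => k; exact: sqr_ge0.
have [LH0|LH0] := leP 0 LH.
  apply: ler_wpM2r; first by rewrite invr_ge0 ltW.
  exact: ler_wpM2l.
have Tz : T = 0.
  apply/eqP; rewrite eq_le T0 andbT.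
  move: h0; rewrite pmulr_lge0 ?invr_gt0 // => h0.
  by rewrite -(nmulr_rge0 _ LH0).
have nz : forall j, nv j = 0.
  move=> j; have /eqP := Tz; rewrite psumr_eq0 => [/allP /(_ j) |k _]; last exact: exprn_ge0.
  by rewrite mem_index_enum /= expf_eq0 /= => /(_ isT) /eqP.
have Sz : S = 0 by rewrite /S big1 // => j _; rewrite nz expr0n.
by rewrite Tz Sz !mul0r mulr0 mul0r.
Qed.

Section Main.
Variables (R : realType) (D N : nat) (H : 'cV[R]_D -> 'M[R]_D) (LH : R).
Hypothesis HLip : forall x y, opnorm (H x - H y) <= LH * norm2 (x - y).
Hypothesis hN : (1 <= N)%N.
Variable gp : nat -> 'cV[R]_D.
Notation mu := (@lebesgue_measure R).

Let a j := tnode R N j.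
Let bt j := beta N gp j.
Let g j t := quadf (H (gp j + (t - a j) *: bt j)) (bt j).
Let f t := quadf (H (pl N gp t)) (dcurve (pl N gp) t).

Lemma N0 : (0 : R) < N%:R.
Proof. by rewrite ltr0n. Qed.

Lemma a_lt j : a j < a j.+1.
Proof. by rewrite /a /tnode ltr_pM2r ?invr_gt0 ?N0 // ltr_nat. Qed.

Lemma a_ge0 j : 0 <= a j.
Proof. by rewrite /a /tnode divr_ge0. Qed.

Lemma pl_on j t : (j < N)%N -> a j <= t < a j.+1 ->
  pl N gp t = gp j + (t - a j) *: bt j.
Proof.
move=> jN /andP[h1 h2].
have NR := N0.
have tr : Num.truncn (t * N%:R) = j.
  apply/eqP; rewrite truncn_eq; last first.
    by rewrite mulr_ge0 // (le_trans (a_ge0 j)).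
  rewrite -ler_pdivrMr // -ltr_pdivlMr //.
  by rewrite h1 h2.
rewrite /pl tr.
have -> : minn j N.-1 = j by apply/minn_idPl; rewrite -ltnS prednK // (leq_ltn_trans (leq0n j) jN).
apply/matrixP => i k; rewrite /bt /beta /a /tnode !mxE.
by field; rewrite lt0r_neq0.
Qed.

Lemma dcurve_on j t : (j < N)%N -> a j < t < a j.+1 ->
  dcurve (pl N gp) t = bt j.
Proof.
move=> jN tin.
apply/matrixP => i k; rewrite (ord1 k) mxE derive1E.
rewrite (@near_eq_derive _ _ _ _ (fun s : R => gp j i 0 + (s - a j) * bt j i 0)); last first.
  have : t \in `]a j, a j.+1[%R by rewrite in_itv.
  move/near_in_itv; apply: filterS => s.
  rewrite in_itv /= => /andP[h1 h2].
  rewrite (@pl_on j s jN); last by rewrite (ltW h1) h2.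
  by rewrite !mxE.
apply: derive_val; apply: is_derive_eq.
by rewrite add0r mul1r scaler0 add0r subr0 /GRing.scale /= mulr1.
Qed.

Lemma f_on j t : (j < N)%N -> a j < t < a j.+1 -> f t = g j t.
Proof.
move=> jN tin; rewrite /f /g (dcurve_on jN tin); congr (quadf (H _) _).
by apply: pl_on => //; case/andP: tin => h1 ->; rewrite (ltW h1).
Qed.

Lemma g_lip j t s : `|g j t - g j s| <= LH * norm2 (bt j) ^+ 3 * `|t - s|.
Proof.
rewrite /g quadfB; apply: le_trans (quadf_bound _ _) _.
apply: le_trans (ler_wpM2r (exprn_ge0 2 (norm2_ge0 _)) (HLip _ _)) _.
have -> : gp j + (t - a j) *: bt j - (gp j + (s - a j) *: bt j) = (t - s) *: bt j.
  by apply/matrixP => i k; rewrite !mxE; ring.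
rewrite norm2Z le_eqVlt; apply/orP; left; apply/eqP; ring.
Qed.

Lemma g_cont j : continuous (g j).
Proof. by apply: (lip_cont (K := LH * norm2 (bt j) ^+ 3)) => x y; exact: g_lip. Qed.

Let c j := quadf (H ((2%:R)^-1 *: (gp j + gp j.+1))) (beta N gp j).
Let m j := (a j + a j.+1) / 2.

Lemma c_eq j : c j = g j (m j).
Proof.
rewrite /c /g; congr (quadf (H _) _).
have NR := N0.
apply/matrixP => i k; rewrite /m /bt /beta /a /tnode !mxE.
by field; rewrite lt0r_neq0.
Qed.

Lemma piece j : `|\int[mu]_(x in `[a j, a j.+1]) g j x - N%:R^-1 * c j|
  <= LH * norm2 (bt j) ^+ 3 / (4 * N%:R ^+ 2).
Proof.
set K := LH * norm2 (bt j) ^+ 3.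
have ab := a_lt j.
have NR := N0.
have e1 : N%:R^-1 * c j = \int[mu]_(x in `[a j, a j.+1]) c j.
  rewrite Rintegral_cst //= lebesgue_measure_itv /= lte_fin ab /=.
  by rewrite /a /tnode mulrC; congr (_ * _); field; rewrite lt0r_neq0.
have gc : continuous (g j) by exact: g_cont.
have ccst : continuous (fun _ : R => c j) by exact: cst_continuous.
have gcc : continuous (fun x => g j x - c j).
  apply: (lip_cont (K := K)) => x y.
  by rewrite opprB addrA subrK; exact: g_lip.
have gca : continuous (fun x => `|g j x - c j|).
  apply: (lip_cont (K := K)) => x y.
  apply: le_trans (ler_dist_dist _ _) _.
  by rewrite opprB addrA subrK; exact: g_lip.
have kc : continuous (fun x : R => K * `|x - m j|).
  apply: (lip_cont (K := `|K|)) => x y.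
  rewrite -mulrBr normrM ler_wpM2l //.
  by apply: le_trans (ler_dist_dist _ _) _; rewrite opprB addrA subrK.
rewrite e1 -RintegralB //; [|exact: cont_int|exact: cont_int].
apply: le_trans; first by apply: le_normr_Rintegral => //; exact: cont_int.
have h2 : \int[mu]_(x in `[a j, a j.+1]) `|g j x - c j| <=
    \int[mu]_(x in `[a j, a j.+1]) (K * `|x - m j|).
  apply: le_Rintegral => //; [exact: cont_int|exact: cont_int|].
  by move=> x _; rewrite c_eq; exact: g_lip.
apply: le_trans h2 _.
rewrite RintegralZl //; last first.
  apply: cont_int; apply: (lip_cont (K := 1)) => x y; rewrite mul1r.
  by apply: le_trans (ler_dist_dist _ _) _; rewrite opprB addrA subrK.
rewrite /m int_abs // /K /a /tnode -natr1.
by rewrite le_eqVlt; apply/orP; left; apply/eqP; field; rewrite lt0r_neq0.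
Qed.

Let r j := \int[mu]_(x in `[a j, a j.+1]) g j x.

Lemma piece_meas j : (j < N)%N -> measurable_fun `[a j, a j.+1[ (EFin \o f).
Proof.
move=> jN.
have mo : measurable_fun `]a j, a j.+1[ f.
  apply: (eq_measurable_fun (g j)).
    by move=> x; rewrite inE /= in_itv /= => h; rewrite (f_on jN h).
  apply: measurable_funS (continuous_measurable_fun (g_cont (j:=j))) => //.
apply/measurable_EFinP; exact/measurable_fun_itv_obnd_cbndP.
Qed.

Lemma piece_int j : (j < N)%N ->
  (\int[mu]_(x in `[a j, a j.+1[) (f x)%:E)%E = (r j)%:E.
Proof.
move=> jN.
have mg : measurable_fun setT (g j) := continuous_measurable_fun (g_cont (j:=j)).
rewrite (@eq_integral_itv_bounded R (a j) (a j.+1) (g j) f true true); last 3 first.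
- apply: (eq_measurable_fun (g j)).
    by move=> x; rewrite inE /= in_itv /= => h; rewrite (f_on jN h).
  exact: measurable_funS mg.
- exact: measurable_funS mg.
- by move=> x; rewrite in_itv /= => h; rewrite (f_on jN h).
rewrite integral_itv_bndo_bndc; last first.
  apply/measurable_EFinP; exact: measurable_funS mg.
rewrite /r /Rintegral fineK //.
apply: integrable_fin_num => //; exact: cont_int (g_cont (j:=j)).
Qed.

Lemma a0 : a 0 = 0.
Proof. by rewrite /a /tnode mul0r. Qed.

Lemma aN : a N = 1.
Proof. by rewrite /a /tnode divff // lt0r_neq0 // N0. Qed.

Lemma partial k : (k <= N)%N ->
  [/\ measurable_fun `[0, a k[ (EFin \o f) &
  (\int[mu]_(x in `[0%R, a k[) (f x)%:E)%E = (\sum_(j < k) r j)%:E].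
Proof.
elim: k => [_|k IH kN].
  rewrite a0 set_itv_ge ?bnd_simp ?ltxx //.
  by split; [exact: measurable_fun_set0 | rewrite integral_set0 big_ord0].
have [mk ek] := IH (ltnW kN).
have -> : `[0, a k.+1[ = `[0, a k[ `|` `[a k, a k.+1[ :> set R.
  by apply: itv_bndbnd_setU; rewrite bnd_simp ?a_ge0 ?ltW ?a_lt.
have mU : measurable_fun (`[0, a k[ `|` `[a k, a k.+1[) (EFin \o f).
  by apply/measurable_funU => //; split => //; exact: piece_meas.
split => //.
rewrite integral_setU //; last first.
  apply/disj_setPS => y [/=]; rewrite 2!in_itv /= => /andP[_ yx] /andP[].
  by rewrite leNgt yx.
by rewrite ek piece_int // big_ord_recr /= EFinD.
Qed.

Lemma energy_eq : energy H (pl N gp) = \sum_(j < N) r j.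
Proof.
have [mf e] := partial (leqnn N).
rewrite aN in mf e.
rewrite /energy /Rintegral -integral_itv_bndo_bndc //.
by rewrite [X in fine X]e.
Qed.

Lemma main_bound : `|energy H (pl N gp) - energy_tra H N gp| <=
  LH * Num.sqrt (N%:R^-1 * \sum_(n < N) norm2 (beta N gp n) ^+ 2) ^+ 3
    / (4 * Num.sqrt N%:R).
Proof.
rewrite energy_eq /energy_tra mulr_sumr -sumrB.
have h : `|\sum_(j < N) (r j - N%:R^-1 * c j)| <=
    \sum_(j < N) LH * norm2 (bt j) ^+ 3 / (4 * N%:R ^+ 2).
  apply: le_trans (ler_norm_sum _ _ _) _; apply: ler_sum => j _; exact: piece.
have h0 := le_trans (normr_ge0 _) h.
apply: le_trans h _.
apply: (final_alg (nv := fun j : 'I_N => norm2 (beta N gp j))) => //.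
by move=> j; exact: norm2_ge0.
Qed.

End Main.


Close Scope classical_set_scope.
Unset Implicit Arguments. Set Strict Implicit.

Theorem proposition7p8 (R : realType) (D N : nat) (H : 'cV[R]_D -> 'M[R]_D) (LH : R)
  (Hsym : forall x, (H x)^T = H x)
  (Hpd : forall x u, u != 0 -> 0 < quadf (H x) u)
  (HLip : forall x y, opnorm (H x - H y) <= LH * norm2 (x - y))
  (hN : (1 <= N)%N) (gp : nat -> 'cV[R]_D) :
  let K3 := Num.sqrt (N%:R^-1 * \sum_(n < N) norm2 (beta N gp n) ^+ 2) in
  `| energy H (pl N gp) - energy_tra H N gp | <= LH * K3 ^+ 3 / (4 * Num.sqrt N%:R).
Proof.
exact: (main_bound HLip hN gp).
Qed.
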